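(* Let $q\neq-1$ be real and $n\ge0$. Then $$T_{2n+1}(x,s,q)=\sum_{k=0}^{n}\begin{bmatrix} 2n+1\\ 2k\end{bmatrix}(-1)^{n-k}\,t_{2n-2k+1}(q)\,x^{2n+1-2k}\,T_{2k}(x,s,q).$$
   Context: $T_0=1$, $T_1=x$, $T_n(x,s,q)=(1+q^{n-1})x\,T_{n-1}(x,s,q)+q^{n-1}s\,T_{n-2}(x,s,q)$ for $n\ge2$. Notation: $[m]=1+q+\cdots+q^{m-1}$, $[m]!=[1]\cdots[m]$, $\begin{bmatrix} m\\ j\end{bmatrix}=\frac{[m]!}{[j]![m-j]!}$. The $q$-exponential is the formal power series $e(z)=\sum_{m\ge0}z^m/[m]!$, and the $q$-tangent numbers $t_{2m+1}(q)$ are defined by the formal power series identity $\frac{e(z)-e(-z)}{e(z)+e(-z)}=\sum_{m\ge0}\frac{(-1)^m t_{2m+1}(q)}{[2m+1]!}z^{2m+1}$. *)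

(* Defs.v *)
From HB Require Import structures.
From mathcomp Require Import all_boot all_order all_algebra.
Set Implicit Arguments. Unset Strict Implicit. Unset Printing Implicit Defensive.
Import Order.TTheory GRing.Theory Num.Theory.
Local Open Scope ring_scope.

Section Defs.
Variable R : fieldType.

Definition qint (q : R) (m : nat) : R := \sum_(i < m) q ^+ i.
Definition qfact (q : R) (m : nat) : R := \prod_(i < m) qint q i.+1.
Definition qbinom (q : R) (m j : nat) : R :=
  qfact q m / (qfact q j * qfact q (m - j)).

(* The polynomials T_n(x,s,q), evaluated at x, s, q *)
Fixpoint T (x s q : R) (n : nat) {struct n} : R :=
  match n with
  | 0 => 1
  | 1 => x
  | (m.+1 as n1).+1 => (1 + q ^+ n1) * x * T x s q n1 + q ^+ n1 * s * T x s q m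
  end.

Definition fps := nat -> R.
Definition fps_mul (f g : fps) : fps :=
  fun n => \sum_(i < n.+1) f i * g (n - i)%N.

Definition qexp_ser (q : R) : fps := fun n => 1 / qfact q n.
Definition qexpN_ser (q : R) : fps := fun n => (-1) ^+ n / qfact q n.

(* the series  sum_m (-1)^m t_{2m+1} z^{2m+1} / [2m+1]!  (t indexed by 2m+1) *)
Definition qtan_ser (q : R) (t : nat -> R) : fps :=
  fun n => if odd n then (-1) ^+ n./2 * t n / qfact q n else 0.

(* t_{2m+1}(q) are the q-tangent numbers:
   (e(z)-e(-z))/(e(z)+e(-z)) = qtan_ser q t  as formal power series,
   i.e. (since e(z)+e(-z) has invertible constant term 2)
   e(z)-e(-z) = (e(z)+e(-z)) * qtan_ser q t. *)
Definition is_qtangent (q : R) (t : nat -> R) : Prop :=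
  forall n, qexp_ser q n - qexpN_ser q n
            = fps_mul (fun k => qexp_ser q k + qexpN_ser q k) (qtan_ser q t) n.
End Defs.

(* Main.v *)
Require Import Defs.
From HB Require Import structures.
From mathcomp Require Import all_boot all_order all_algebra.
From mathcomp Require Import reals.
From mathcomp Require Import zify ring.
Import Order.TTheory GRing.Theory Num.Theory.
Set Implicit Arguments. Unset Strict Implicit. Unset Printing Implicit Defensive.
Local Open Scope ring_scope.

Definition trp (R : fieldType) (N : nat) (a : nat -> R) : {poly R} := \poly_(i < N) a i.

Lemma fps_polyE (R : fieldType) (a b : nat -> R) (P Q : {poly R}) n :
  (forall i, (i <= n)%N -> P`_i = a i) -> (forall i, (i <= n)%N -> Q`_i = b i) ->
  fps_mul a b n = (P * Q)`_n.
Proof.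
move=> HP HQ; rewrite coefM /fps_mul; apply: eq_bigr => i _.
rewrite HP ?HQ //; last by rewrite -ltnS.
exact: leq_subr.
Qed.

Lemma trpE (R : fieldType) N (a : nat -> R) i : (i < N)%N -> (trp N a)`_i = a i.
Proof. by move=> h; rewrite coef_poly h. Qed.

Lemma fps_trp (R : fieldType) (a b : nat -> R) n :
  fps_mul a b n = (trp n.+1 a * trp n.+1 b)`_n.
Proof. by apply: fps_polyE => i hi; rewrite trpE. Qed.

Lemma fps_mulC (R : fieldType) (a b : nat -> R) n : fps_mul a b n = fps_mul b a n.
Proof. by rewrite !fps_trp mulrC. Qed.

Lemma fps_mulA (R : fieldType) (a b c : nat -> R) n :
  fps_mul (fps_mul a b) c n = fps_mul a (fps_mul b c) n.
Proof.
have E1 : forall (u v : nat -> R) i, (i <= n)%N ->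
   (trp n.+1 u * trp n.+1 v)`_i = fps_mul u v i.
  move=> u v i hi; symmetry; apply: fps_polyE => j hj; apply: trpE.
    by rewrite ltnS (leq_trans hj).
  by rewrite ltnS (leq_trans hj).
have -> : fps_mul (fps_mul a b) c n = ((trp n.+1 a * trp n.+1 b) * trp n.+1 c)`_n.
  apply: fps_polyE => i hi; first exact: (E1 a b i hi).
  by rewrite (trpE c (i:=i) (N:=n.+1)) // ltnS.
have -> : fps_mul a (fps_mul b c) n = (trp n.+1 a * (trp n.+1 b * trp n.+1 c))`_n.
  apply: fps_polyE => i hi; last exact: (E1 b c i hi).
  by rewrite (trpE a (i:=i) (N:=n.+1)) // ltnS.
by rewrite mulrA.
Qed.

Lemma fps_ext (R : fieldType) (a a' b b' : nat -> R) n :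
  (forall i, (i <= n)%N -> a i = a' i) -> (forall i, (i <= n)%N -> b i = b' i) ->
  fps_mul a b n = fps_mul a' b' n.
Proof.
move=> ha hb; rewrite /fps_mul; apply: eq_bigr => i _.
have hi : (i <= n)%N by rewrite -ltnS.
by rewrite ha // hb // leq_subr.
Qed.

Lemma fps_addl (R : fieldType) (a a' b : nat -> R) n :
  fps_mul (fun k => a k + a' k) b n = fps_mul a b n + fps_mul a' b n.
Proof. by rewrite /fps_mul -big_split; apply: eq_bigr => i _; rewrite mulrDl. Qed.

Lemma fps_scalel (R : fieldType) (c : R) (a b : nat -> R) n :
  fps_mul (fun k => c * a k) b n = c * fps_mul a b n.
Proof. by rewrite /fps_mul mulr_sumr; apply: eq_bigr => i _; rewrite mulrA. Qed.

Definition Dq (R : fieldType) (q : R) (f : nat -> R) n := qint q n.+1 * f n.+1.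
Definition th (R : fieldType) (q : R) (f : nat -> R) n := q ^+ n * f n.
Definition ze (R : fieldType) (f : nat -> R) n := if n is m.+1 then f m else 0.

Lemma qint0 (R : fieldType) (q : R) : qint q 0 = 0.
Proof. by rewrite /qint big_ord0. Qed.

Lemma qintS (R : fieldType) (q : R) n : qint q n.+1 = qint q n + q ^+ n.
Proof. by rewrite /qint big_ord_recr. Qed.

Lemma qint1 (R : fieldType) (q : R) : qint q 1 = 1.
Proof. by rewrite qintS qint0 add0r expr0. Qed.

Lemma qintD (R : fieldType) (q : R) i k : qint q (i + k) = qint q i + q ^+ i * qint q k.
Proof.
elim: k => [|k IH]; first by rewrite addn0 qint0 mulr0 addr0.
by rewrite addnS !qintS IH exprD mulrDr addrA.
Qed.

Lemma qint_mul (R : fieldType) (q : R) n : (q - 1) * qint q n = q ^+ n - 1.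
Proof.
elim: n => [|n IH]; first by rewrite qint0 mulr0 expr0 subrr.
by rewrite qintS mulrDr IH exprS; ring.
Qed.

Lemma fps_ze (R : fieldType) (f g : nat -> R) n :
  fps_mul (ze f) g n = ze (fps_mul f g) n.
Proof.
case: n => [|n]; first by rewrite /fps_mul big_ord_recl big_ord0 /= mul0r addr0.
rewrite /= /fps_mul big_ord_recl /= mul0r add0r; apply: eq_bigr => i _.
by rewrite /bump /= add0n add1n subSS.
Qed.

Lemma fps_th (R : fieldType) (q : R) (f g : nat -> R) n :
  th q (fps_mul f g) n = fps_mul (th q f) (th q g) n.
Proof.
rewrite /th /fps_mul mulr_sumr; apply: eq_bigr => i _.
have hi : (i <= n)%N by rewrite -ltnS.
by rewrite -{1}(subnKC hi) exprD; ring.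
Qed.

Lemma fps_Dq (R : fieldType) (q : R) (f g : nat -> R) n :
  Dq q (fps_mul f g) n = fps_mul (Dq q f) g n + fps_mul (th q f) (Dq q g) n.
Proof.
rewrite /Dq /fps_mul mulr_sumr.
have -> : \sum_(i < n.+2) qint q n.+1 * (f i * g (n.+1 - i)%N) =
   \sum_(i < n.+2) qint q i * f i * g (n.+1 - i)%N +
   \sum_(i < n.+2) q ^+ i * f i * (qint q (n.+1 - i) * g (n.+1 - i)%N).
  rewrite -big_split; apply: eq_bigr => i _.
  have hi : (i <= n.+1)%N by rewrite -ltnS.
  by rewrite -{1}(subnKC hi) qintD /=; ring.
congr (_ + _).
  rewrite big_ord_recl /= qint0 !mul0r add0r; apply: eq_bigr => i _.
  by rewrite /bump /= add1n subSS.
rewrite big_ord_recr /= subnn qint0 mul0r mulr0 addr0; apply: eq_bigr => i _.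
have hi : (i <= n)%N by rewrite -ltnS.
by rewrite /th subSn.
Qed.

Lemma th_sub (R : fieldType) (q : R) (f : nat -> R) n :
  th q f n - f n = (q - 1) * ze (Dq q f) n.
Proof.
case: n => [|n]; first by rewrite /th /= expr0 mul1r subrr mulr0.
by rewrite /th /= /Dq mulrA qint_mul; ring.
Qed.

Lemma Dq_th (R : fieldType) (q : R) (f : nat -> R) n :
  Dq q (th q f) n = q * th q (Dq q f) n.
Proof. by rewrite /Dq /th exprS; ring. Qed.

Lemma fps_lin (R : fieldType) (c1 c2 : R) (g1 g2 h : nat -> R) n :
  fps_mul (fun k => c1 * g1 k + c2 * g2 k) h n = c1 * fps_mul g1 h n + c2 * fps_mul g2 h n.
Proof.
rewrite /fps_mul !mulr_sumr -big_split /=; apply: eq_bigr => i _; ring.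
Qed.

Lemma fps_linr (R : fieldType) (c1 c2 : R) (g h1 h2 : nat -> R) n :
  fps_mul g (fun k => c1 * h1 k + c2 * h2 k) n = c1 * fps_mul g h1 n + c2 * fps_mul g h2 n.
Proof.
rewrite /fps_mul !mulr_sumr -big_split /=; apply: eq_bigr => i _; ring.
Qed.

Lemma fps_scr (R : fieldType) (c : R) (g h : nat -> R) n :
  fps_mul g (fun k => c * h k) n = c * fps_mul g h n.
Proof. by rewrite /fps_mul mulr_sumr; apply: eq_bigr => i _; ring. Qed.

Lemma fps_zer (R : fieldType) (f g : nat -> R) n :
  fps_mul g (ze f) n = ze (fps_mul g f) n.
Proof.
rewrite fps_mulC fps_ze; case: n => [|n] //=; exact: fps_mulC.
Qed.

Lemma main_rec (R : fieldType) (q x s : R) (f e : nat -> R)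
  (F1 : forall n, Dq q e n = - x * e n)
  (F2 : forall n, th q e n = e n + (1 - q) * x * ze e n)
  (F3 : forall n, Dq q (Dq q f) n = x * Dq q f n + q * x * th q (Dq q f) n + q * s * th q f n)
  n :
  Dq q (Dq q (fps_mul f e)) n = x ^+ 2 * fps_mul f e n + q * s * th q (fps_mul f e) n.
Proof.
set P := fun g => fps_mul g e.
have S1 : forall m, Dq q (fps_mul f e) m = P (Dq q f) m - x * P (th q f) m.
  move=> m; rewrite fps_Dq (@fps_ext _ (th q f) (th q f) (Dq q e) (fun k => - x * e k)) //.
  by rewrite fps_scr /P; ring.
have S2 : Dq q (Dq q (fps_mul f e)) n = Dq q (P (Dq q f)) n - x * Dq q (P (th q f)) n.
  transitivity (qint q n.+1 * Dq q (fps_mul f e) n.+1); first by [].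
  by rewrite S1 /Dq; ring.
have S3 : Dq q (P (Dq q f)) n = P (Dq q (Dq q f)) n - x * P (th q (Dq q f)) n.
  rewrite /P fps_Dq (@fps_ext _ (th q (Dq q f)) (th q (Dq q f)) (Dq q e) (fun k => - x * e k)) //.
  by rewrite fps_scr; ring.
have S4 : Dq q (P (th q f)) n = q * P (th q (Dq q f)) n - x * P (th q (th q f)) n.
  rewrite /P fps_Dq (@fps_ext _ (th q (th q f)) (th q (th q f)) (Dq q e) (fun k => - x * e k)) //.
  rewrite (@fps_ext _ (Dq q (th q f)) (fun k => q * th q (Dq q f) k) e e) //; last first.
    by move=> i _; rewrite Dq_th.
  by rewrite fps_scr fps_scalel; ring.
have S5 : forall m, P (Dq q (Dq q f)) m = x * P (Dq q f) m + q * x * P (th q (Dq q f)) m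
            + q * s * P (th q f) m.
  move=> m; rewrite /P (@fps_ext _ _ (fun k => 1 * (fun k => x * Dq q f k + q * x * th q (Dq q f) k) k + (q * s) * th q f k) e e) //; last first.
    by move=> i _; rewrite F3 mul1r.
  rewrite fps_lin mul1r (@fps_lin _ x (q * x)); ring.
have S6 : th q (fps_mul f e) n = P (th q f) n + (1 - q) * x * ze (P (th q f)) n.
  rewrite fps_th (@fps_ext _ (th q f) (th q f) (th q e) (fun k => 1 * e k + ((1 - q) * x) * ze e k)) //; last first.
    by move=> i _; rewrite F2 mul1r.
  by rewrite fps_linr fps_zer mul1r.
have S7 : forall m, P (th q (Dq q f)) m = P (Dq q f) m + (q - 1) * ze (P (Dq q (Dq q f))) m.
  move=> m; rewrite /P (@fps_ext _ _ (fun k => 1 * Dq q f k + (q - 1) * ze (Dq q (Dq q f)) k) e e) //; last first.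
    by move=> i _; rewrite -th_sub; ring.
  by rewrite fps_lin fps_ze mul1r.
have S8 : P (th q (th q f)) n = P f n + (q - 1) * (q * ze (P (th q (Dq q f))) n + ze (P (Dq q f)) n).
  rewrite /P (@fps_ext _ _ (fun k => 1 * f k + (q - 1) * (fun k => q * ze (th q (Dq q f)) k + 1 * ze (Dq q f) k) k) e e) //; last first.
    move=> i _; have h1 := th_sub q (th q f) i; have h2 := th_sub q f i.
    have h3 : ze (Dq q (th q f)) i = q * ze (th q (Dq q f)) i.
      by case: i {h1 h2} => [|i] /=; rewrite ?mulr0 ?Dq_th.
    rewrite h3 in h1; rewrite mul1r; apply/eqP; rewrite -subr_eq0; apply/eqP.
    rewrite -[th q (th q f) i](subrK (th q f i)) h1 -[th q f i](subrK (f i)) h2; ring.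
  by rewrite fps_lin (@fps_lin _ q 1) !fps_ze mul1r mul1r.
rewrite S2 S3 S4 S5 S8 S6 S7.
case: n {S2 S3 S4 S6 S8} => [|m]; rewrite /ze; first by rewrite /P; ring.
rewrite S5 /P; ring.
Qed.

Lemma qint_neq0 (R : realFieldType) (q : R) (hq : q != -1) m : qint q m.+1 != 0.
Proof.
have [q0|q0] := leP 0 q.
  have : 1 <= qint q m.+1.
    elim: m => [|m IH]; first by rewrite qint1.
    by rewrite qintS; apply: (le_trans IH); rewrite lerDl exprn_ge0.
  by apply: contraTneq => ->; rewrite ler10.
apply/negP => /eqP h0.
have h1 := qint_mul q m.+1; rewrite h0 mulr0 in h1.
have h2 : `|q| ^+ m.+1 == 1 by rewrite -normrX -(subrK 1 (q ^+ m.+1)) -h1 add0r normr1.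
rewrite pexpr_eq1 // ltr0_norm // in h2.
by move: hq; rewrite -(eqP h2) opprK eqxx.
Qed.

Lemma qfactS (R : fieldType) (q : R) n : qfact q n.+1 = qfact q n * qint q n.+1.
Proof. by rewrite /qfact big_ord_recr. Qed.

Lemma qfact0 (R : fieldType) (q : R) : qfact q 0 = 1.
Proof. by rewrite /qfact big_ord0. Qed.

Lemma qfact_neq0 (R : realFieldType) (q : R) (hq : q != -1) n : qfact q n != 0.
Proof.
elim: n => [|n IH]; first by rewrite qfact0 oner_neq0.
by rewrite qfactS mulf_neq0 // qint_neq0.
Qed.

Lemma TSS (R : fieldType) (x s q : R) n :
  T x s q n.+2 = (1 + q ^+ n.+1) * x * T x s q n.+1 + q ^+ n.+1 * s * T x s q n.
Proof. by []. Qed.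

Lemma u_odd (R : realFieldType) (q : R) (hq : q != -1) (x s : R) m :
  fps_mul (fun n => T x s q n / qfact q n) (fun n => (- x) ^+ n / qfact q n) (2 * m).+1 = 0.
Proof.
set f := fun n => _; set e := fun n => _.
have nz := qfact_neq0 hq; have nzi := qint_neq0 hq.
have F1 : forall n, Dq q e n = - x * e n.
  move=> n; rewrite /Dq /e qfactS exprS; field.
  by rewrite nz nzi.
have F2 : forall n, th q e n = e n + (1 - q) * x * ze e n.
  case=> [|n]; first by rewrite /th /ze /= expr0 mul1r mulr0 addr0.
  rewrite /th /ze /e qfactS.
  have h := qint_mul q n.+1.
  have -> : q ^+ n.+1 = (q - 1) * qint q n.+1 + 1 by rewrite h; ring.
  rewrite exprS; field; by rewrite nz nzi.
have F3 : forall n, Dq q (Dq q f) n = x * Dq q f n + q * x * th q (Dq q f) n + q * s * th q f n.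
  move=> n; rewrite /Dq /th /f TSS !qfactS exprS; field.
  by rewrite nz !nzi.
elim: m => [|m IH].
  by rewrite /fps_mul !big_ord_recr big_ord0 /= /f /e qfactS qfact0 qint1 muln0 /= expr1 expr0; field.
have := main_rec F1 F2 F3 (2 * m).+1.
rewrite /th IH !mulr0 addr0 /Dq.
have -> : (2 * m.+1).+1 = (2 * m).+3 by rewrite mulnS.
move/eqP; rewrite !mulf_eq0 (negPf (nzi _)) (negPf (nzi _)) /=.
by move/eqP.
Qed.

Lemma fps_cancel (R : fieldType) (a b c : nat -> R) :
  (forall n, fps_mul a c n = fps_mul b c n) -> c 0%N != 0 -> forall n, a n = b n.
Proof.
move=> H c0 n; elim/ltn_ind: n => n IH.
have := H n; rewrite /fps_mul !big_ord_recr /= subnn.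
rewrite (eq_bigr (fun i : 'I_n => b i * c (n - i)%N)); last first.
  by move=> i _; rewrite IH.
move/addrI/eqP; rewrite -subr_eq0 -mulrBl mulf_eq0 (negPf c0) orbF subr_eq0.
by move/eqP.
Qed.

Lemma sum_pairs (R : fieldType) (g : nat -> R) n :
  \sum_(i < (2 * n).+2) g i = \sum_(k < n.+1) (g (2 * k)%N + g (2 * k).+1).
Proof.
elim: n => [|n IH]; first by rewrite !big_ord_recr !big_ord0 /= !add0r.
rewrite big_ord_recr /= big_ord_recr /= -addrA.
have E : (2 * n.+1 = (2 * n).+2)%N by rewrite mulnS.
by rewrite E IH [in RHS]big_ord_recr /= E.
Qed.

Theorem theorem3p1 (R : realType) (q : R) (hq : q != -1) (t : nat -> R)
    (ht : is_qtangent q t) (x s : R) (n : nat) :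
  T x s q (2 * n).+1 =
  \sum_(k < n.+1)
     qbinom q (2 * n).+1 (2 * k) * (-1) ^+ (n - k)
     * t (2 * n - 2 * k).+1 * x ^+ ((2 * n).+1 - 2 * k) * T x s q (2 * k).
Proof.
have nz := qfact_neq0 hq.
set f := fun n => T x s q n / qfact q n.
set e := fun n => (- x) ^+ n / qfact q n.
set c := fun n => x ^+ n / qfact q n.
set fe := fun n => if odd n then 0 else f n.
set fo := fun n => if odd n then f n else 0.
set ce := fun n => if odd n then 0 else c n.
set co := fun n => if odd n then c n else 0.
set tau := fun n => qtan_ser q t n * x ^+ n.
have K1 : forall n, fps_mul fo ce n = fps_mul fe co n.
  move=> m; case: (boolP (odd m)) => om.
    have := u_odd hq x s m./2.
    have -> : (2 * m./2).+1 = m by rewrite -[in RHS](odd_double_half m) om add1n -mul2n.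
    rewrite /fps_mul => h; apply/eqP; rewrite -subr_eq0 -sumrB; apply/eqP; rewrite -[RHS]h.
    apply: eq_bigr => i _.
    have hi : (i <= m)%N by rewrite -ltnS.
    rewrite /fo /ce /fe /co /f /e /c oddB // om exprNn -signr_odd oddB // om.
    by case: (odd i) => /=; rewrite ?expr0 ?expr1; ring.
  rewrite /fps_mul; apply: eq_bigr => i _.
  have hi : (i <= m)%N by rewrite -ltnS.
  rewrite /fo /ce /fe /co oddB // (negPf om).
  by case: (odd i) => /=; rewrite ?mulr0 ?mul0r.
have K2 : forall n, co n = fps_mul ce tau n.
  move=> m; have h := ht m; have two : (2 : R) != 0 by rewrite pnatr_eq0.
  have : x ^+ m * (qexp_ser q m - qexpN_ser q m) = 2 * co m.
    rewrite /qexp_ser /qexpN_ser /co /c -signr_odd.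
    by case: (odd m); rewrite ?expr0 ?expr1; field.
  rewrite h /fps_mul mulr_sumr.
  rewrite (eq_bigr (fun i : 'I_m.+1 => 2 * (ce i * tau (m - i)%N))); last first.
    move=> i _; have hi : (i <= m)%N by rewrite -ltnS.
    rewrite /qexp_ser /qexpN_ser /ce /c /tau -{1}(subnKC hi) exprD -signr_odd.
    by case: (odd i); rewrite ?expr0 ?expr1; field.
  rewrite -mulr_sumr => h2; apply: (mulfI two); by rewrite -h2.
have K3 : forall n, fps_mul fo ce n = fps_mul (fps_mul fe tau) ce n.
  move=> m; rewrite K1 (@fps_ext _ fe fe co (fun k => fps_mul tau ce k)) //; last first.
    by move=> i _; rewrite K2 fps_mulC.
  by rewrite fps_mulA.
have K4 := fps_cancel K3.
have ce0 : ce 0%N != 0 by rewrite /ce /c /= expr0 qfact0 divr1 oner_neq0.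
have := K4 ce0 (2 * n).+1.
have ho : odd (2 * n).+1 by rewrite /= oddM.
rewrite /fo ho /f /fps_mul (sum_pairs (fun i => fe i * tau ((2 * n).+1 - i)%N)) => h.
have -> : T x s q (2 * n).+1 = qfact q (2 * n).+1 *
  \sum_(k < n.+1) (fe (2 * k)%N * tau ((2 * n).+1 - 2 * k)%N +
         fe (2 * k).+1 * tau ((2 * n).+1 - (2 * k).+1)%N).
  by rewrite -h; field.
rewrite mulr_sumr; apply: eq_bigr => k _.
have hk : (k <= n)%N by rewrite -ltnS.
rewrite /fe /= !oddM /= mul0r addr0 /tau /qtan_ser /f /qbinom.
have -> : ((2 * n).+1 - 2 * k)%N = (2 * (n - k)).+1 by lia.
have -> : (2 * n - 2 * k)%N = (2 * (n - k))%N by lia.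
have o1 : odd (2 * (n - k)).+1 by rewrite /= oddM.
have h2 : ((2 * (n - k)).+1)./2 = (n - k)%N.
  by rewrite mul2n; exact: (half_bit_double (n - k) true).
rewrite o1 h2.
by field; rewrite !nz.
Qed.
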